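(* (1) For every $\theta\in\mathbb{C}^4$, the projective surface $\overline{\mathcal{S}}(\theta)$ is smooth in a neighborhood of $L=L_1\cup L_2\cup L_3$. (2) If $\theta=\mathrm{rh}(\kappa)$ with $\kappa\in\mathcal{K}$, then $\overline{\mathcal{S}}(\theta)$ is smooth everywhere if and only if $\kappa\in\mathcal{K}\setminus\mathrm{Wall}$.
   Context: For $\theta=(\theta_1,\theta_2,\theta_3,\theta_4)\in\mathbb{C}^4$, $\overline{\mathcal{S}}(\theta)\subset\mathbb{P}^3$ is the cubic surface $X_1X_2X_3+X_0(X_1^2+X_2^2+X_3^2)-X_0^2(\theta_1X_1+\theta_2X_2+\theta_3X_3)+\theta_4X_0^3=0$, the closure of the affine surface $x_1x_2x_3+x_1^2+x_2^2+x_3^2-\theta_1x_1-\theta_2x_2-\theta_3x_3+\theta_4=0$ via $x\mapsto[1:x_1:x_2:x_3]$; $L_i=\{X_0=X_i=0\}$ for $i=1,2,3$. $\mathcal{K}=\{\kappa\in\mathbb{C}^5:2\kappa_0+\kappa_1+\kappa_2+\kappa_3+\kappa_4=1\}$; $\mathrm{Wall}$ is the union of the hyperplanes $\kappa_i=m$ ($i=1,\dots,4$, $m\in\mathbb{Z}$) and $\kappa_1\pm\kappa_2\pm\kappa_3\pm\kappa_4=2m+1$ ($m\in\mathbb{Z}$). The map $\mathrm{rh}:\mathcal{K}\to\mathbb{C}^4$ is defined by $a_i=2\cos\pi\kappa_i$ ($i=1,2,3$), $a_4=-2\cos\pi\kappa_4$, $\theta_i=a_ia_4+a_ja_k$ for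 $\{i,j,k\}=\{1,2,3\}$, and $\theta_4=a_1a_2a_3a_4+a_1^2+a_2^2+a_3^2+a_4^2-4$. *)

(* Defs.v *)
From mathcomp Require Import all_boot all_order all_algebra.
From mathcomp Require Import complex.
From mathcomp Require Import reals sequences trigo.
From mathcomp Require Import mpoly.
Set Implicit Arguments.
Unset Strict Implicit.
Unset Printing Implicit Defensive.
Import GRing.Theory Num.Theory.
Local Open Scope ring_scope.

Section Defs.
Variable R : realType.
Local Notation C := (R[i]).

Definition ccos (z : C) : C :=
  let x := complex.Re z in let y := complex.Im z in
  let ch := (expR y + expR (- y)) / 2 in
  let sh := (expR y - expR (- y)) / 2 in
  Complex (cos x * ch) (- (sin x * sh)).

Definition Xc (j : nat) : {mpoly C[4]} := 'X_(inord j).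

Definition Fcubic (t1 t2 t3 t4 : C) : {mpoly C[4]} :=
  Xc 1 * Xc 2 * Xc 3
  + Xc 0 * (Xc 1 ^+ 2 + Xc 2 ^+ 2 + Xc 3 ^+ 2)
  - Xc 0 ^+ 2 * (t1%:MP * Xc 1 + t2%:MP * Xc 2 + t3%:MP * Xc 3)
  + t4%:MP * Xc 0 ^+ 3.

(* x : 'I_4 -> C, x <> 0, represents the point [x0:x1:x2:x3] of P^3.
   It is a singular point of the projective surface {F = 0} iff F and all
   its partial derivatives vanish at x (a scaling-invariant condition). *)
Definition singular_point (t1 t2 t3 t4 : C) (x : 'I_4 -> C) : Prop :=
  x <> (fun=> 0) /\ (Fcubic t1 t2 t3 t4).@[x] = 0 /\
  forall j : 'I_4, (mderiv j (Fcubic t1 t2 t3 t4)).@[x] = 0.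

Definition smooth_everywhere (t1 t2 t3 t4 : C) : Prop :=
  forall x : 'I_4 -> C, ~ singular_point t1 t2 t3 t4 x.

Definition on_L (x : 'I_4 -> C) : Prop :=
  x (inord 0) = 0 /\
  (x (inord 1) = 0 \/ x (inord 2) = 0 \/ x (inord 3) = 0).

(* Smooth in a neighbourhood of L: since the singular locus is Zariski
   closed, this is equivalent to having no singular point on L. *)
Definition smooth_near_L (t1 t2 t3 t4 : C) : Prop :=
  forall x : 'I_4 -> C, on_L x -> ~ singular_point t1 t2 t3 t4 x.

Definition in_K (k0 k1 k2 k3 k4 : C) : Prop :=
  2 * k0 + k1 + k2 + k3 + k4 = 1.

Definition is_int (z : C) : Prop := exists m : int, z = m%:~R.

Definition in_Wall (k1 k2 k3 k4 : C) : Prop :=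
  is_int k1 \/ is_int k2 \/ is_int k3 \/ is_int k4 \/
  exists (s2 s3 s4 : bool) (m : int),
    k1 + (-1) ^+ s2 * k2 + (-1) ^+ s3 * k3 + (-1) ^+ s4 * k4
      = (2 * m + 1)%:~R.

Definition rh_a (k : C) : C := 2 * ccos (Complex (pi : R) 0 * k).

Definition rh (k1 k2 k3 k4 : C) : C * C * C * C :=
  let a1 := rh_a k1 in let a2 := rh_a k2 in let a3 := rh_a k3 in
  let a4 := - rh_a k4 in
  (a1 * a4 + a2 * a3, a2 * a4 + a1 * a3, a3 * a4 + a1 * a2,
   a1 * a2 * a3 * a4 + a1 ^+ 2 + a2 ^+ 2 + a3 ^+ 2 + a4 ^+ 2 - 4).

End Defs.

(* Main.v *)
Require Import Defs.
From mathcomp Require Import all_boot all_order all_algebra.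
From mathcomp Require Import complex.
From mathcomp Require Import reals sequences exp trigo.
From mathcomp Require Import mpoly.
From mathcomp Require Import ring lra.
From Stdlib Require FunctionalExtensionality.
Import Order.TTheory GRing.Theory Num.Theory.
Local Open Scope ring_scope.

Section S.
Variable R : realType.
Local Notation C := (R[i]).

Lemma cos_periodic_int (y : R) (k : int) : cos (y + k%:~R * (pi *+ 2)) = cos y.
Proof.
have hn : forall (z : R) (n : nat), cos (z + n%:R * (pi *+ 2)) = cos z.
  move=> z; elim=> [|n IH]; first by rewrite mul0r addr0.
  by rewrite -natr1 mulrDl mul1r addrA cosD2pi.
case: k => n; first by rewrite hn.
rewrite NegzE rmorphN /= mulNr.
by have := hn (y - n.+1%:R * (pi *+ 2)) n.+1; rewrite subrK => <-.
Qed.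

Lemma cos_eq1 (x : R) : cos x = 1 -> exists k : int, x = k%:~R * (pi *+ 2).
Proof.
move=> hx.
set T := pi *+ 2.
have hT : 0 < T by rewrite pmulrn_lgt0 // pi_gt0.
set k := Num.floor (x / T).
exists k.
set y := x - k%:~R * T.
have hy : cos y = 1.
  by rewrite -(cos_periodic_int y k) /y subrK.
have h1 : k%:~R * T <= x.
  by rewrite -ler_pdivlMr // Num.Theory.floor_le.
have h2 : x < (k + 1)%:~R * T.
  by rewrite -ltr_pdivrMr // Num.Theory.floorD1_gt.
have y0 : 0 <= y by rewrite /y subr_ge0.
have yT : y < T.
  by move: h2; rewrite rmorphD /= mulrDl mul1r /y; lra.
suff : y = 0 by move/eqP; rewrite subr_eq0 => /eqP.
have [ypi|piy] := lerP y pi.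
  apply: cos_inj; rewrite ?in_itv /= ?y0 ?ypi ?lexx ?pi_ge0 //.
  by rewrite hy cos0.
exfalso.
have : T - y = 0.
  apply: cos_inj; rewrite ?in_itv /= ?lexx ?pi_ge0 //.
  - apply/andP; split; first by rewrite subr_ge0 ltW.
    by rewrite /T lerBlDr mulr2n lerD2l ltW.
  - by rewrite cos0 addrC cosD2pi cosN.
by move/eqP; rewrite subr_eq0 => /eqP hh; move: yT; rewrite hh ltxx.
Qed.


Definition E (z : C) : C :=
  Complex (expR (- (pi * complex.Im z)) * cos (pi * complex.Re z))
          (expR (- (pi * complex.Im z)) * sin (pi * complex.Re z)).

Lemma E_add z w : E (z + w) = E z * E w.
Proof.
case: z => a b; case: w => c d; rewrite /E.
simpc => /=.
apply/eqP; rewrite eq_complex /=; apply/andP; split; apply/eqP;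
  rewrite !mulrDr !opprD expRD ?cosD ?sinD; ring.
Qed.

Lemma E0 : E 0 = 1.
Proof.
rewrite /E /= mulr0 oppr0 expR0 cos0 sin0 mul1r mulr0.
by [].
Qed.

Lemma E_mulN z : E z * E (- z) = 1.
Proof. by rewrite -E_add subrr E0. Qed.

Lemma E_neq0 z : E z != 0.
Proof.
apply/negP => /eqP h; have := E_mulN z; rewrite h mul0r => /eqP.
by rewrite eq_sym oner_eq0.
Qed.

Lemma E_neg z : E (- z) = (E z)^-1.
Proof.
by rewrite -[E (-z)]mul1r -(mulVf (E_neq0 z)) -mulrA E_mulN mulr1.
Qed.

Lemma rh_aE k : rh_a k = E k + (E k)^-1.
Proof.
rewrite -E_neg; case: k => a b; rewrite /rh_a /ccos /E.
rewrite mulr_natl mulr2n.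
simpc => /=.
apply/eqP; rewrite eq_complex /=; apply/andP; split; apply/eqP;
  rewrite ?mul0r ?subr0 ?addr0 ?mulrN ?opprK ?cosN ?sinN; by field.
Qed.


Lemma E1 : E 1 = -1.
Proof.
rewrite /E /= mulr0 oppr0 expR0 mulr1 cospi sinpi mul1r.
by apply/eqP; rewrite eq_complex /= mulr0 oppr0 !eqxx.
Qed.

Lemma E_nat_pm1 (n : nat) : E n%:R = 1 \/ E n%:R = -1.
Proof.
elim: n => [|n [IH|IH]]; first by left; rewrite E0.
  by right; rewrite -natr1 E_add IH E1 mul1r.
by left; rewrite -natr1 E_add IH E1 mulrNN mul1r.
Qed.

Lemma E_int_pm1 (m : int) : E m%:~R = 1 \/ E m%:~R = -1.
Proof.
case: m => n; first exact: E_nat_pm1.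
rewrite NegzE rmorphN /= E_neg.
by case: (E_nat_pm1 n.+1) => ->; [left; rewrite invr1 | right; rewrite invrN1].
Qed.

Lemma E_even (m : int) : E (2 * m)%:~R = 1.
Proof.
have -> : (2 * m = m + m)%R by ring.
rewrite intrD E_add.
by case: (E_int_pm1 m) => ->; rewrite ?mulr1 ?mulrNN ?mulr1.
Qed.

Lemma E_odd (m : int) : E (2 * m + 1)%:~R = -1.
Proof. by rewrite intrD E_add E_even mul1r E1. Qed.

Lemma E_eq1 z : E z = 1 -> exists m : int, z = (2 * m)%:~R.
Proof.
case: z => a b; rewrite /E /= => /eqP; rewrite eq_complex /= => /andP[/eqP h1 /eqP h2].
have he : 0 < expR (- (pi * b)) := expR_gt0 _.
have hs : sin (pi * a) = 0.
  by move/eqP: h2; rewrite mulf_eq0 (gt_eqF he) /= => /eqP.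
have hc : `|cos (pi * a)| = 1 := sin0cos1 hs.
have hc1 : cos (pi * a) = 1.
  move: hc; have [hpos|hneg] := lerP 0 (cos (pi * a)).
    by rewrite ger0_norm.
  by rewrite ltr0_norm // => hc; exfalso; move: h1; rewrite -(opprK (cos _)) hc mulrN1; move=> h; move: he; rewrite -oppr_lt0 h ltr10.
have hb : b = 0.
  move: h1; rewrite hc1 mulr1 -expR0 => /expR_inj /eqP.
  by rewrite oppr_eq0 mulf_eq0 (gt_eqF (pi_gt0 R)) /= => /eqP.
have [k hk] := cos_eq1 _ hc1.
exists k.
have ha : a = (2 * k)%:~R.
  apply: (mulfI (lt0r_neq0 (pi_gt0 R))); rewrite hk intrM /= mulrC mulr2n; ring.
by rewrite hb ha -(rmorph_int (real_complex R)).
Qed.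


Lemma E_eqN1 z : E z = -1 -> exists m : int, z = (2 * m + 1)%:~R.
Proof.
move=> h.
have h1 : E (z - 1) = 1 by rewrite E_add E_neg E1 h invrN1 mulrNN mulr1.
have [m hm] := E_eq1 _ h1.
by exists m; rewrite intrD -hm /= subrK.
Qed.

Definition sg (s : bool) : C := (-1) ^+ s.

Lemma E_sg s k : E (sg s * k) = if s then (E k)^-1 else E k.
Proof. by case: s; rewrite /sg /= ?expr0 ?expr1 ?mul1r ?mulN1r ?E_neg. Qed.

Lemma E_sg_inv s k : E (sg s * k) + (E (sg s * k))^-1 = E k + (E k)^-1.
Proof. by rewrite E_sg; case: s; rewrite ?invrK // addrC. Qed.

Lemma is_int_of k : E k * E k = 1 -> is_int k.
Proof.
rewrite -E_add => /E_eq1 [m hm]; exists m.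
have : 2 * (k - m%:~R) = 0.
  have h2 : ((2 * m)%:~R : C) = m%:~R + m%:~R by rewrite -intrD; congr intmul; ring.
  by rewrite h2 in hm; rewrite mulrBr -[2 * k]/(2%:R * k) mulr_natl mulr2n hm; ring.
by move/eqP; rewrite mulf_eq0 pnatr_eq0 /= subr_eq0 => /eqP.
Qed.

Lemma sq4 (t : C) : t != 0 -> (t + t^-1)^+2 - 4 = 0 -> t * t = 1.
Proof.
move=> t0 h.
have : (t - t^-1)^+2 = 0 by rewrite -h; field.
move/eqP; rewrite expf_eq0 /= subr_eq0 => /eqP h'.
by rewrite {1}h' mulVf.
Qed.

Lemma sum_inv0 (u w : C) : u != 0 -> w != 0 ->
  u + u^-1 + (w + w^-1) = 0 -> u * w = -1 \/ u / w = -1.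
Proof.
move=> u0 w0 h.
have : (u * w + 1) * (u + w) = 0.
  have -> : (u * w + 1) * (u + w) = u * w * (u + u^-1 + (w + w^-1)) by field; rewrite ?u0 ?w0.
  by rewrite h mulr0.
move/eqP; rewrite mulf_eq0 => /orP[|]; rewrite ?addr_eq0 => /eqP h'.
  by left; rewrite h'.
by right; rewrite h' mulNr divff.
Qed.

Definition aff_sing (th1 th2 th3 th4 y1 y2 y3 : C) : Prop :=
  y2*y3 + 2*y1 - th1 = 0 /\ y1*y3 + 2*y2 - th2 = 0 /\ y1*y2 + 2*y3 - th3 = 0 /\
  y1*y2*y3 + y1^+2+y2^+2+y3^+2 - th1*y1 - th2*y2 - th3*y3 + th4 = 0.

Definition affS (a1 a2 a3 a4 y1 y2 y3 : C) : Prop :=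
  aff_sing (a1*a4+a2*a3) (a2*a4+a1*a3) (a3*a4+a1*a2)
    (a1*a2*a3*a4+a1^+2+a2^+2+a3^+2+a4^+2-4) y1 y2 y3.

Lemma core (a1 a2 a3 a4 y1 y2 y3 : C) : affS a1 a2 a3 a4 y1 y2 y3 ->
  (a1^+2-4)*(a3^+2-4) = 0 \/ (a2^+2-4)*(a4^+2-4) = 0 \/
  (y2^+2 - a1*a3*y2 + a1^+2+a3^+2-4 = 0 /\ y2^+2 - a2*a4*y2 + a2^+2+a4^+2-4 = 0).
Proof.
rewrite /affS /aff_sing => -[g1 [g2 [g3 hF]]].
have h16 : (16 : C) != 0 by rewrite pnatr_eq0.
have e1 : 16 * ((y2^+2 - a1*a3*y2 + a1^+2+a3^+2-4) * (y2^+2 - a2*a4*y2 + a2^+2+a4^+2-4)) = 0.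
  have -> : 16 * ((y2^+2 - a1*a3*y2 + a1^+2+a3^+2-4) * (y2^+2 - a2*a4*y2 + a2^+2+a4^+2-4)) =
    (2*y2*(y2*y3 + 2*y1 - (a1*a4+a2*a3)) - 4*(y1*y2 + 2*y3 - (a3*a4+a1*a2)))^+2
    - 4*(y2^+2-4)*((y2*y3 + 2*y1 - (a1*a4+a2*a3))^+2 - 4*(y1*y2*y3 + y1^+2+y2^+2+y3^+2 - (a1*a4+a2*a3)*y1 - (a2*a4+a1*a3)*y2 - (a3*a4+a1*a2)*y3 + (a1*a2*a3*a4+a1^+2+a2^+2+a3^+2+a4^+2-4)))
    by ring.
  by rewrite g1 g3 hF; ring.
have e2 : 16 * ((2*y2 - a1*a3) * (y2^+2 - a2*a4*y2 + a2^+2+a4^+2-4) + (y2^+2 - a1*a3*y2 + a1^+2+a3^+2-4) * (2*y2 - a2*a4)) = 0.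
  have -> : 16 * ((2*y2 - a1*a3) * (y2^+2 - a2*a4*y2 + a2^+2+a4^+2-4) + (y2^+2 - a1*a3*y2 + a1^+2+a3^+2-4) * (2*y2 - a2*a4)) =
    - 4*(y2^+2-4)*(2*y3*(y2*y3 + 2*y1 - (a1*a4+a2*a3)) - 4*(y1*y3 + 2*y2 - (a2*a4+a1*a3)))
    + 2*(-2*(a1*a4+a2*a3))*(2*y2*(y2*y3 + 2*y1 - (a1*a4+a2*a3)) - 4*(y1*y2 + 2*y3 - (a3*a4+a1*a2)))
    + 4*(2*y2)*(y3*(2*y2*(y2*y3 + 2*y1 - (a1*a4+a2*a3)) - 4*(y1*y2 + 2*y3 - (a3*a4+a1*a2)))
       - ((y2*y3 + 2*y1 - (a1*a4+a2*a3))^+2 - 4*(y1*y2*y3 + y1^+2+y2^+2+y3^+2 - (a1*a4+a2*a3)*y1 - (a2*a4+a1*a3)*y2 - (a3*a4+a1*a2)*y3 + (a1*a2*a3*a4+a1^+2+a2^+2+a3^+2+a4^+2-4))))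
    by ring.
  by rewrite g1 g2 g3 hF; ring.
move/eqP: e2; move/eqP: e1; rewrite !mulf_eq0 (negbTE h16) /=.
set p := (y2^+2 - a1*a3*y2 + a1^+2+a3^+2-4).
set q := (y2^+2 - a2*a4*y2 + a2^+2+a4^+2-4).
move=> /orP[/eqP hp|/eqP hq].
  rewrite hp mul0r addr0 mulf_eq0 => /orP[/eqP hp'|/eqP hq].
    left; have -> : (a1^+2-4)*(a3^+2-4) = (2*y2 - a1*a3)^+2 - 4 * p by rewrite /p; ring.
    by rewrite hp hp'; ring.
  by right; right; split.
rewrite hq mulr0 add0r mulf_eq0 => /orP[/eqP hp|/eqP hq'].
  by right; right; split.
right; left; have -> : (a2^+2-4)*(a4^+2-4) = (2*y2 - a2*a4)^+2 - 4 * q by rewrite /q; ring.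
by rewrite hq hq'; ring.
Qed.


Lemma wall_of (k1 k2 k3 k4 : C) (s2 s3 s4 : bool) :
  E k1 * (if s2 then (E k2)^-1 else E k2) * (if s3 then (E k3)^-1 else E k3)
    * (if s4 then (E k4)^-1 else E k4) = -1 -> in_Wall k1 k2 k3 k4.
Proof.
rewrite -!E_sg -!E_add => /E_eqN1 [m hm].
by right; right; right; right; exists s2, s3, s4, m; rewrite -hm.
Qed.

Lemma P13f (t1 t3 r : C) : t1 != 0 -> t3 != 0 ->
  r^+2 - (t1+t1^-1)*(t3+t3^-1)*r + (t1+t1^-1)^+2+(t3+t3^-1)^+2-4
  = (r - (t1*t3 + (t1*t3)^-1)) * (r - (t1/t3 + (t1/t3)^-1)).
Proof. by move=> h1 h3; field; rewrite ?h1 ?h3. Qed.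

Lemma P24f (t2 t4 r : C) : t2 != 0 -> t4 != 0 ->
  r^+2 - (t2+t2^-1)*(-(t4+t4^-1))*r + (t2+t2^-1)^+2+(-(t4+t4^-1))^+2-4
  = (r + (t2*t4 + (t2*t4)^-1)) * (r + (t2/t4 + (t2/t4)^-1)).
Proof. by move=> h2 h4; field; rewrite ?h2 ?h4. Qed.

Lemma fwd (k1 k2 k3 k4 y1 y2 y3 : C) :
  affS (rh_a k1) (rh_a k2) (rh_a k3) (- rh_a k4) y1 y2 y3 -> in_Wall k1 k2 k3 k4.
Proof.
have n1 := E_neq0 k1; have n2 := E_neq0 k2; have n3 := E_neq0 k3; have n4 := E_neq0 k4.
move/core; rewrite !rh_aE.
case=> [/eqP|[/eqP|[]]].
- rewrite mulf_eq0 => /orP[] /eqP /(sq4 _ (E_neq0 _)) /is_int_of h.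
    by left.
  by right; right; left.
- rewrite sqrrN mulf_eq0 => /orP[] /eqP /(sq4 _ (E_neq0 _)) /is_int_of h.
    by right; left.
  by right; right; right; left.
rewrite P13f // P24f //.
move=> /eqP; rewrite mulf_eq0 subr_eq0 subr_eq0 => hU /eqP; rewrite mulf_eq0 !addr_eq0.
have hsum : forall U W : C, (y2 == U) -> (y2 == - W) -> U + W = 0.
  by move=> U W /eqP <- /eqP ->; rewrite addNr.
have m13 : E k1 * E k3 != 0 by rewrite mulf_neq0.
have d13 : E k1 / E k3 != 0 by rewrite mulf_neq0 // invr_eq0.
have m24 : E k2 * E k4 != 0 by rewrite mulf_neq0.
have d24 : E k2 / E k4 != 0 by rewrite mulf_neq0 // invr_eq0.
move=> hW.
case/orP: hU => hU; case/orP: hW => hW;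
  have := hsum _ _ hU hW => /sum_inv0 -/(_ ltac:(assumption) ltac:(assumption)) [] h.
- by apply: (@wall_of _ _ _ _ false false false); rewrite -h /=; field; rewrite ?n1 ?n2 ?n3 ?n4.
- by apply: (@wall_of _ _ _ _ true false true); rewrite -h /=; field; rewrite ?n1 ?n2 ?n3 ?n4.
- by apply: (@wall_of _ _ _ _ false false true); rewrite -h /=; field; rewrite ?n1 ?n2 ?n3 ?n4.
- by apply: (@wall_of _ _ _ _ true false false); rewrite -h /=; field; rewrite ?n1 ?n2 ?n3 ?n4.
- by apply: (@wall_of _ _ _ _ false true false); rewrite -h /=; field; rewrite ?n1 ?n2 ?n3 ?n4.
- by apply: (@wall_of _ _ _ _ true true true); rewrite -h /=; field; rewrite ?n1 ?n2 ?n3 ?n4.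
- by apply: (@wall_of _ _ _ _ false true true); rewrite -h /=; field; rewrite ?n1 ?n2 ?n3 ?n4.
- by apply: (@wall_of _ _ _ _ true true false); rewrite -h /=; field; rewrite ?n1 ?n2 ?n3 ?n4.
Qed.


Lemma pm1_inv (e : C) : e = 1 \/ e = -1 -> e^-1 = e.
Proof. by case=> ->; rewrite ?invr1 ?invrN1. Qed.

Ltac affS_ring := rewrite /affS /aff_sing; split; [ring|split; [ring|split; ring]].

Lemma pt_int1 (e a2 a3 a4 : C) : e = 1 \/ e = -1 ->
  affS (e + e^-1) a2 a3 a4 (e*a4) (e*a3) (e*a2).
Proof. by case=> ->; rewrite ?invr1 ?invrN1; affS_ring. Qed.

Lemma pt_int2 (a1 e a3 a4 : C) : e = 1 \/ e = -1 ->
  affS a1 (e + e^-1) a3 a4 (e*a3) (e*a4) (e*a1).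
Proof. by case=> ->; rewrite ?invr1 ?invrN1; affS_ring. Qed.

Lemma pt_int3 (a1 a2 e a4 : C) : e = 1 \/ e = -1 ->
  affS a1 a2 (e + e^-1) a4 (e*a2) (e*a1) (e*a4).
Proof. by case=> ->; rewrite ?invr1 ?invrN1; affS_ring. Qed.

Lemma pt_int4 (a1 a2 a3 e : C) : e = 1 \/ e = -1 ->
  affS a1 a2 a3 (- (e + e^-1)) (-e*a1) (-e*a2) (-e*a3).
Proof. by case=> ->; rewrite ?invr1 ?invrN1; affS_ring. Qed.

Lemma pt_red (s1 s2 s3 s4 : C) : s1 != 0 -> s2 != 0 -> s3 != 0 ->
  s1 * s2 * s3 * s4 = -1 ->
  affS (s1 + s1^-1) (s2 + s2^-1) (s3 + s3^-1) (- (s4 + s4^-1))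
    (s2*s3 + (s2*s3)^-1) (s1*s3 + (s1*s3)^-1) (s1*s2 + (s1*s2)^-1).
Proof.
move=> h1 h2 h3 h.
have -> : s4 = - (s1 * s2 * s3)^-1.
  apply: (mulfI (_ : s1 * s2 * s3 != 0)); first by rewrite !mulf_neq0.
  by rewrite h mulrN divff // !mulf_neq0.
rewrite /affS /aff_sing.
split; [field|split; [field|split; field]]; by rewrite ?h1 ?h2 ?h3.
Qed.

Lemma wall_pt (k1 k2 k3 k4 : C) : in_Wall k1 k2 k3 k4 ->
  exists y1 y2 y3, affS (rh_a k1) (rh_a k2) (rh_a k3) (- rh_a k4) y1 y2 y3.
Proof.
rewrite !rh_aE.
case=> [[m ->]|[[m ->]|[[m ->]|[[m ->]|[s2 [s3 [s4 [m hm]]]]]]]].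
- by eexists; eexists; eexists; apply: pt_int1; apply: E_int_pm1.
- by eexists; eexists; eexists; apply: pt_int2; apply: E_int_pm1.
- by eexists; eexists; eexists; apply: pt_int3; apply: E_int_pm1.
- by eexists; eexists; eexists; apply: pt_int4; apply: E_int_pm1.
rewrite -(E_sg_inv s2 k2) -(E_sg_inv s3 k3) -(E_sg_inv s4 k4).
eexists; eexists; eexists; apply: pt_red; rewrite ?E_neq0 //.
by rewrite -!E_add; rewrite /sg hm E_odd.
Qed.

Lemma inord_eq (i j : nat) : (i < 4)%N -> (j < 4)%N ->
  ((inord i : 'I_4) == inord j) = (i == j).
Proof. by move=> hi hj; rewrite -val_eqE /= !inordK. Qed.

Lemma mderivXU (i j : 'I_4) : mderiv i ('X_j : {mpoly C[4]}) = (j == i)%:R%:MP.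
Proof.
rewrite mderivX mnm1E; case: eqP => [->|_].
  have -> : (U_(i) - U_(i) = 0)%MM by apply/mnmP => k; rewrite !mnmE subnn.
  by rewrite mpolyX0 scale1r.
by rewrite scale0r.
Qed.

Lemma evalF (t1 t2 t3 t4 : C) (x : 'I_4 -> C) :
  (Fcubic t1 t2 t3 t4).@[x] =
  let x0 := x (inord 0) in let x1 := x (inord 1) in
  let x2 := x (inord 2) in let x3 := x (inord 3) in
  x1*x2*x3 + x0*(x1^+2+x2^+2+x3^+2) - x0^+2*(t1*x1+t2*x2+t3*x3) + t4*x0^+3.
Proof.
rewrite /Fcubic /Xc !(mevalD, mevalB, mevalM, mevalC, mevalXU, mevalN, rmorphXn) /=; ring.
Qed.

Lemma evalD (t1 t2 t3 t4 : C) (x : 'I_4 -> C) (j : nat) : (j < 4)%N ->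
  (mderiv (inord j) (Fcubic t1 t2 t3 t4)).@[x] =
  let x0 := x (inord 0) in let x1 := x (inord 1) in
  let x2 := x (inord 2) in let x3 := x (inord 3) in
  let d k := ((k == j)%:R : C) in
  d 1%N*x2*x3 + x1*d 2%N*x3 + x1*x2*d 3%N + d 0%N*(x1^+2+x2^+2+x3^+2)
  + x0*(2*x1*d 1%N+2*x2*d 2%N+2*x3*d 3%N) - 2*x0*d 0%N*(t1*x1+t2*x2+t3*x3)
  - x0^+2*(t1*d 1%N+t2*d 2%N+t3*d 3%N) + 3*t4*x0^+2*d 0%N.
Proof.
move=> hj.
rewrite /Fcubic /Xc !exprS !expr0 !mulr1.
rewrite !(mderivD, mderivB, mderivN, mderivM, mderivXU, mderivC).
rewrite !(mevalD, mevalB, mevalM, mevalC, mevalXU, meval0, mevalN).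
rewrite !inord_eq //=; ring.
Qed.


Lemma ord4_cases (P : 'I_4 -> Prop) :
  P (inord 0) -> P (inord 1) -> P (inord 2) -> P (inord 3) -> forall i, P i.
Proof.
move=> h0 h1 h2 h3 i; rewrite -(inord_val i).
by case: i => [[|[|[|[|n]]]] hn].
Qed.

Lemma sing_eqs (t1 t2 t3 t4 : C) (x : 'I_4 -> C) : singular_point t1 t2 t3 t4 x ->
  let x0 := x (inord 0) in let x1 := x (inord 1) in
  let x2 := x (inord 2) in let x3 := x (inord 3) in
  [/\ x1*x2*x3 + x0*(x1^+2+x2^+2+x3^+2) - x0^+2*(t1*x1+t2*x2+t3*x3) + t4*x0^+3 = 0,
      x1^+2+x2^+2+x3^+2 - 2*x0*(t1*x1+t2*x2+t3*x3) + 3*t4*x0^+2 = 0,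
      x2*x3 + 2*x0*x1 - t1*x0^+2 = 0,
      x1*x3 + 2*x0*x2 - t2*x0^+2 = 0 &
      x1*x2 + 2*x0*x3 - t3*x0^+2 = 0].
Proof.
move=> [_ [hF hD]] x0 x1 x2 x3.
split.
- by rewrite -hF evalF.
- by rewrite -(hD (inord 0)) evalD //= /x0 /x1 /x2 /x3; ring.
- by rewrite -(hD (inord 1)) evalD //= /x0 /x1 /x2 /x3; ring.
- by rewrite -(hD (inord 2)) evalD //= /x0 /x1 /x2 /x3; ring.
- by rewrite -(hD (inord 3)) evalD //= /x0 /x1 /x2 /x3; ring.
Qed.

Lemma sing_x0 (t1 t2 t3 t4 : C) (x : 'I_4 -> C) :
  singular_point t1 t2 t3 t4 x -> x (inord 0) != 0.
Proof.
move=> hs; have := @sing_eqs _ _ _ _ _ hs => /= -[_ hD0 hD1 hD2 hD3].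
apply/eqP => h0; case: hs => hx _; apply: hx.
move: hD0 hD1 hD2 hD3; rewrite h0.
set x1 := x (inord 1); set x2 := x (inord 2); set x3 := x (inord 3).
move=> e0 e1 e2 e3.
have h1 : x1 ^+ 4 = 0.
  have -> : x1 ^+ 4 = x1^+2 * (x1^+2+x2^+2+x3^+2 - 2*0*(t1*x1+t2*x2+t3*x3) + 3*t4*0^+2)
     - (x1*x2 + 2*0*x3 - t3*0^+2)^+2 - (x1*x3 + 2*0*x2 - t2*0^+2)^+2 by ring.
  by rewrite e0 e2 e3; ring.
have h2 : x2 ^+ 4 = 0.
  have -> : x2 ^+ 4 = x2^+2 * (x1^+2+x2^+2+x3^+2 - 2*0*(t1*x1+t2*x2+t3*x3) + 3*t4*0^+2)
     - (x1*x2 + 2*0*x3 - t3*0^+2)^+2 - (x2*x3 + 2*0*x1 - t1*0^+2)^+2 by ring.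
  by rewrite e0 e1 e3; ring.
have h3 : x3 ^+ 4 = 0.
  have -> : x3 ^+ 4 = x3^+2 * (x1^+2+x2^+2+x3^+2 - 2*0*(t1*x1+t2*x2+t3*x3) + 3*t4*0^+2)
     - (x1*x3 + 2*0*x2 - t2*0^+2)^+2 - (x2*x3 + 2*0*x1 - t1*0^+2)^+2 by ring.
  by rewrite e0 e1 e2; ring.
move/eqP: h1; move/eqP: h2; move/eqP: h3; rewrite !expf_eq0 /= => /eqP z3 /eqP z2 /eqP z1.
apply: FunctionalExtensionality.functional_extensionality.
by apply: ord4_cases.
Qed.

Lemma sing_aff (t1 t2 t3 t4 : C) (x : 'I_4 -> C) :
  singular_point t1 t2 t3 t4 x -> exists y1 y2 y3, aff_sing t1 t2 t3 t4 y1 y2 y3.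
Proof.
move=> hs; have n0 := @sing_x0 _ _ _ _ _ hs; have := @sing_eqs _ _ _ _ _ hs => /= -[hF _ hD1 hD2 hD3].
move: n0 hF hD1 hD2 hD3.
set x0 := x (inord 0); set x1 := x (inord 1); set x2 := x (inord 2); set x3 := x (inord 3).
move=> n0 hF hD1 hD2 hD3.
exists (x1 / x0), (x2 / x0), (x3 / x0); rewrite /aff_sing; split; [|split; [|split]].
- transitivity ((x2*x3 + 2*x0*x1 - t1*x0^+2) / x0^+2); first by field; rewrite ?n0.
  by rewrite hD1 mul0r.
- transitivity ((x1*x3 + 2*x0*x2 - t2*x0^+2) / x0^+2); first by field; rewrite ?n0.
  by rewrite hD2 mul0r.
- transitivity ((x1*x2 + 2*x0*x3 - t3*x0^+2) / x0^+2); first by field; rewrite ?n0.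
  by rewrite hD3 mul0r.
- transitivity ((x1*x2*x3 + x0*(x1^+2+x2^+2+x3^+2) - x0^+2*(t1*x1+t2*x2+t3*x3) + t4*x0^+3) / x0^+3);
    first by field; rewrite ?n0.
  by rewrite hF mul0r.
Qed.

Lemma aff_not_smooth (t1 t2 t3 t4 y1 y2 y3 : C) :
  aff_sing t1 t2 t3 t4 y1 y2 y3 -> ~ smooth_everywhere t1 t2 t3 t4.
Proof.
move=> [g1 [g2 [g3 gF]]] hsm.
pose x := fun i : 'I_4 => nth 0 [:: 1; y1; y2; y3] (nat_of_ord i).
have xv : forall k, (k < 4)%N -> x (inord k) = nth 0 [:: 1; y1; y2; y3] k.
  by move=> k hk; rewrite /x inordK.
apply: (hsm x); split; [|split].
- move=> h; have := congr1 (fun f => f (inord 0)) h; rewrite /= xv //= => /eqP.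
  by rewrite oner_eq0.
- rewrite evalF /= !xv //=.
  by rewrite -gF; ring.
- apply: ord4_cases; rewrite evalD //= !xv //=.
  + transitivity (3*(y1*y2*y3 + y1^+2+y2^+2+y3^+2 - t1*y1 - t2*y2 - t3*y3 + t4) - y1*(y2*y3 + 2*y1 - t1) - y2*(y1*y3 + 2*y2 - t2) - y3*(y1*y2 + 2*y3 - t3)); first ring.
    by rewrite gF g1 g2 g3; ring.
  + by rewrite -g1; ring.
  + by rewrite -g2; ring.
  + by rewrite -g3; ring.
Qed.


Lemma part2 (k1 k2 k3 k4 : C) :
  let a1 := rh_a k1 in let a2 := rh_a k2 in let a3 := rh_a k3 in
  let a4 := - rh_a k4 in
  smooth_everywhere (a1 * a4 + a2 * a3) (a2 * a4 + a1 * a3) (a3 * a4 + a1 * a2)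
    (a1 * a2 * a3 * a4 + a1 ^+ 2 + a2 ^+ 2 + a3 ^+ 2 + a4 ^+ 2 - 4)
  <-> ~ in_Wall k1 k2 k3 k4.
Proof.
move=> a1 a2 a3 a4; split.
- move=> hs hw; have [y1 [y2 [y3 hy]]] := @wall_pt _ _ _ _ hw.
  exact: (@aff_not_smooth _ _ _ _ _ _ _ hy hs).
- move=> hnw x hx; have [y1 [y2 [y3 hy]]] := @sing_aff _ _ _ _ _ hx.
  by apply: hnw; apply: (@fwd _ _ _ _ y1 y2 y3); exact: hy.
Qed.

End S.

Theorem lemma5p2 (R : realType) :
  (forall t1 t2 t3 t4 : R[i], smooth_near_L t1 t2 t3 t4) /\
  (forall k0 k1 k2 k3 k4 : R[i], in_K k0 k1 k2 k3 k4 ->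
     let '(t1, t2, t3, t4) := rh k1 k2 k3 k4 in
     (smooth_everywhere t1 t2 t3 t4 <-> ~ in_Wall k1 k2 k3 k4)).
Proof.
split.
- move=> t1 t2 t3 t4 x [h0 _] hs.
  by move: (@sing_x0 R _ _ _ _ _ hs); rewrite h0 eqxx.
- move=> k0 k1 k2 k3 k4 _; exact: (@part2 R k1 k2 k3 k4).
Qed.
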